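(* For $n\ge 1$, the number of edges of $\mathcal{SP}_L(IS_n)$ is $$\frac12\left((2^n-1)^2-(3^n-2^n)\right).$$
   Context: $IS_n$ is the set of all partial injective maps of an $n$-element set $X$, with composition written left to right ($\alpha\beta$ means first $\alpha$, then $\beta$); its zero is the empty map. For $a\in IS_n$, $S^1a=\{sa:s\in IS_n\}\cup\{a\}$. $\mathcal{P}_L(IS_n)$ is the simple graph on the non-empty partial injections with distinct $a,b$ adjacent iff $S^1a\cap S^1b$ contains a non-empty map. $L_a$ is the Green $\mathcal{L}$-class of $a$ ($a\,\mathcal{L}\,b$ iff $S^1a=S^1b$). $\mathcal{SP}_L(IS_n)$ is the simple graph with vertex set $\{L_a: a \text{ non-empty}\}$, distinct $L_a,L_b$ adjacent iff $a,b$ are adjacent in $\mathcal{P}_L(IS_n)$. *)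

(* Defs.v *)
From mathcomp Require Import all_boot all_order all_algebra.
Set Implicit Arguments. Unset Strict Implicit. Unset Printing Implicit Defensive.

(* X = 'I_n.  A partial map of X is encoded as f : {ffun 'I_n -> option 'I_n},
   with f x = None meaning x is not in the domain. *)
Definition pmap (n : nat) := {ffun 'I_n -> option 'I_n}.

Definition is_pinj n (f : pmap n) : bool :=
  [forall x, forall y, ((f x != None) && (f x == f y)) ==> (x == y)].

Definition ISn n : {set pmap n} := [set f | is_pinj f].

Definition pzero n : pmap n := [ffun => None].

(* composition written left to right: pcomp a b = "a b" = first a, then b *)
Definition pcomp n (a b : pmap n) : pmap n := [ffun x => obind b (a x)].

Definition S1 n (a : pmap n) : {set pmap n} :=
  [set pcomp s a | s in ISn n] :|: [set a].

Definition PLadj n (a b : pmap n) : bool :=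
  (a != b) && [exists c in S1 a :&: S1 b, c != pzero n].

Definition Lclass n (a : pmap n) : {set pmap n} :=
  [set b in ISn n | S1 b == S1 a].

Definition ISn_nz n : {set pmap n} := ISn n :\ pzero n.

Definition SPverts n : {set {set pmap n}} := [set Lclass a | a in ISn_nz n].

Definition SPadj n (C D : {set pmap n}) : bool :=
  (C != D) && [exists a in ISn_nz n, exists b in ISn_nz n,
     [&& C == Lclass a, D == Lclass b & PLadj a b]].

Definition SPedges n : {set {set {set pmap n}}} :=
  [set E | [exists C in SPverts n, exists D in SPverts n,
     (E == [set C; D]) && SPadj C D]].

(* Main.v *)
Require Import Defs.
From mathcomp Require Import all_boot all_order all_algebra.
Set Implicit Arguments. Unset Strict Implicit. Unset Printing Implicit Defensive.

Section S.
Variable n : nat.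
Implicit Types a b c s : Defs.pmap n.

Definition img a : {set 'I_n} := [set y | [exists x, a x == Some y]].

Definition pid (A : {set 'I_n}) : Defs.pmap n := [ffun x => if x \in A then Some x else None].

Lemma pinjP a : reflect (forall x y, a x != None -> a x = a y -> x = y) (a \in ISn n).
Proof.
rewrite inE; apply: (iffP forallP) => [H x y nx exy | H x].
  move/forallP: (H x) => /(_ y) /implyP H1; apply/eqP; apply: H1; by rewrite nx exy eqxx.
by apply/forallP => y; apply/implyP => /andP[nx /eqP e]; apply/eqP; apply: H.
Qed.

Lemma imgP a y : reflect (exists x, a x = Some y) (y \in img a).
Proof.
rewrite inE; apply: (iffP existsP) => [[x /eqP]|[x e]]; first by exists x.
by exists x; rewrite e.
Qed.

Lemma comp_pinj s a : s \in ISn n -> a \in ISn n -> Defs.pcomp s a \in ISn n.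
Proof.
move=> /pinjP Hs /pinjP Ha; apply/pinjP => x y; rewrite !ffunE.
case ex: (s x) => [u|] //=; case ey: (s y) => [v|] //= nu e.
  by apply: Hs; rewrite ?ex ?ey //; congr Some; apply: Ha.
by rewrite e in nu.
Qed.

Lemma img_comp s a : img (Defs.pcomp s a) \subset img a.
Proof.
apply/subsetP => y /imgP [x]; rewrite ffunE; case: (s x) => //= u e.
by apply/imgP; exists u.
Qed.

Lemma S1_img a c : c \in S1 a -> img c \subset img a.
Proof.
rewrite inE => /orP[/imsetP [s _ ->]|]; first exact: img_comp.
by rewrite inE => /eqP ->.
Qed.

Lemma S1_ISn a c : a \in ISn n -> c \in S1 a -> c \in ISn n.
Proof.
move=> Ha; rewrite inE => /orP[/imsetP [s Hs ->]|]; first exact: comp_pinj.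
by rewrite inE => /eqP ->.
Qed.

Lemma img_S1 a c : a \in ISn n -> c \in ISn n -> img c \subset img a -> c \in S1 a.
Proof.
move=> /pinjP Ha /pinjP Hc /subsetP sub.
pose s : Defs.pmap n := [ffun x => obind (fun y => [pick z | a z == Some y]) (c x)].
have key x y : c x = Some y -> exists z, s x = Some z /\ a z = Some y.
  move=> e; rewrite /s ffunE e /=.
  case: pickP => [z /eqP az|none]; first by exists z.
  have : y \in img a by apply: sub; apply/imgP; exists x.
  by case/imgP => z az; move: (none z); rewrite az eqxx.
have Hs : s \in ISn n.
  apply/pinjP => x x'.
  case ex: (c x) => [y|]; last by rewrite /s ffunE ex.
  case: (key x y ex) => z [-> az] _.
  case ex': (c x') => [y'|]; last by rewrite /s ffunE ex'.
  case: (key x' y' ex') => z' [-> az'] [ezz]; subst z'.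
  apply: Hc; first by rewrite ex.
  by rewrite ex ex' -az -az'.
have -> : c = Defs.pcomp s a.
  apply/ffunP => x; rewrite ffunE.
  case ex: (c x) => [y|]; last by rewrite /s ffunE ex.
  by case: (key x y ex) => z [-> az].
by rewrite inE; apply/orP; left; apply/imsetP; exists s.
Qed.

Lemma S1_self a : a \in S1 a.
Proof. by rewrite !inE eqxx orbT. Qed.

Lemma S1_eq a b : a \in ISn n -> b \in ISn n -> (S1 a == S1 b) = (img a == img b).
Proof.
move=> Ha Hb; apply/eqP/eqP => [E|E].
  apply/eqP; rewrite eqEsubset; apply/andP; split.
    by apply: S1_img; rewrite -E S1_self.
  by apply: S1_img; rewrite E S1_self.
apply/setP => c; apply/idP/idP => H.
  by apply: img_S1 => //; [exact: S1_ISn H | rewrite -E; exact: S1_img].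
by apply: img_S1 => //; [exact: S1_ISn H | rewrite E; exact: S1_img].
Qed.

Lemma Lclass_img a : a \in ISn n -> Lclass a = [set c in ISn n | img c == img a].
Proof.
move=> Ha; apply/setP => c; rewrite !inE.
by case Hc: (is_pinj c) => //=; rewrite S1_eq // inE.
Qed.

Lemma pid_ISn A : pid A \in ISn n.
Proof.
apply/pinjP => x y; rewrite !ffunE.
by case: (x \in A) => //; case: (y \in A) => // _ [].
Qed.

Lemma img_pid A : img (pid A) = A.
Proof.
apply/setP => y; apply/imgP/idP => [[x]|yA]; last by exists y; rewrite ffunE yA.
by rewrite ffunE; case: ifP => // xA [<-].
Qed.

Lemma nz_img c : (c != pzero n) = (img c != set0).
Proof.
apply/idP/idP.
  apply: contraNN => /eqP E; apply/eqP/ffunP => x; rewrite ffunE.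
  case ex: (c x) => [y|] //.
  have : y \in img c by apply/imgP; exists x.
  by rewrite E inE.
apply: contraNN => /eqP ->; apply/eqP/setP => y; rewrite in_set0.
by apply/negbTE/negP => /imgP [x]; rewrite ffunE.
Qed.

Definition Phi (A : {set 'I_n}) := Lclass (pid A).

Lemma PhiE A : Phi A = [set c in ISn n | img c == A].
Proof. by rewrite /Phi Lclass_img ?pid_ISn // img_pid. Qed.

Lemma Phi_inj : injective Phi.
Proof.
move=> A B E.
have : pid A \in Phi A by rewrite PhiE inE pid_ISn img_pid eqxx.
by rewrite E PhiE inE img_pid => /andP[_ /eqP].
Qed.


Lemma PLadj_img a b : a \in ISn n -> b \in ISn n ->
  PLadj a b = (a != b) && (img a :&: img b != set0).
Proof.
move=> Ha Hb; rewrite /PLadj; congr (_ && _); apply/existsP/idP.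
  case=> c /andP[]; rewrite in_setI => /andP[ca cb]; rewrite nz_img => /set0Pn [y yc].
  apply/set0Pn; exists y; rewrite in_setI.
  by rewrite (subsetP (S1_img ca)) // (subsetP (S1_img cb)).
case/set0Pn => y; rewrite in_setI => /andP[ya yb].
exists (pid [set y]); rewrite in_setI nz_img img_pid.
apply/andP; split; last by apply/set0Pn; exists y; rewrite set11.
by apply/andP; split; apply: img_S1; rewrite ?pid_ISn ?img_pid ?sub1set.
Qed.

Lemma Lclass_Phi a : a \in ISn n -> Lclass a = Phi (img a).
Proof. by move=> Ha; rewrite Lclass_img // PhiE. Qed.

Definition Pairs : {set {set 'I_n} * {set 'I_n}} :=
  [set p | (p.1 != p.2) && (p.1 :&: p.2 != set0)].

Definition fE (p : {set 'I_n} * {set 'I_n}) := [set Phi p.1; Phi p.2].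

Lemma pid_nz A : A != set0 -> pid A \in ISn_nz n.
Proof. by move=> H; rewrite in_setD1 pid_ISn nz_img img_pid H. Qed.

Lemma SPedgesE : SPedges n = fE @: Pairs.
Proof.
apply/setP => E; apply/idP/imsetP.
  rewrite inE => /existsP [C /andP [_ /existsP [D /andP [_ /andP [/eqP -> HCD]]]]].
  case/andP: HCD => nCD /existsP [a /andP [Ha /existsP [b /andP [Hb]]]].
  case/and3P => /eqP eC /eqP eD Hab.
  move: Ha Hb; rewrite !in_setD1 => /andP [_ Ha] /andP [_ Hb].
  exists (img a, img b); last by rewrite /fE /= eC eD !Lclass_Phi.
  rewrite inE /=; rewrite PLadj_img // in Hab; case/andP: Hab => _ ->.
  by rewrite andbT; apply: contraNN nCD => /eqP e; rewrite eC eD !Lclass_Phi // e.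
case=> [[A B]]; rewrite inE /= => /andP [nAB nI] ->.
have nA : A != set0 by apply: contraNN nI => /eqP ->; rewrite set0I.
have nB : B != set0 by apply: contraNN nI => /eqP ->; rewrite setI0.
rewrite inE; apply/existsP; exists (Phi A); apply/andP; split.
  by apply/imsetP; exists (pid A); rewrite ?pid_nz.
apply/existsP; exists (Phi B); apply/andP; split.
  by apply/imsetP; exists (pid B); rewrite ?pid_nz.
rewrite eqxx /=; apply/andP; split.
  by apply: contraNN nAB => /eqP /Phi_inj ->.
apply/existsP; exists (pid A); rewrite pid_nz //=.
apply/existsP; exists (pid B); rewrite pid_nz //= !eqxx /=.
rewrite PLadj_img ?pid_ISn // !img_pid nI andbT.
by apply: contraNN nAB => /eqP e; rewrite -(img_pid A) e img_pid.
Qed.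


Lemma set2_eq (T : finType) (x1 x2 y1 y2 : T) : [set x1; x2] = [set y1; y2] ->
  (x1 = y1 /\ x2 = y2) \/ (x1 = y2 /\ x2 = y1).
Proof.
move=> E.
have h1 : x1 \in [set y1; y2] by rewrite -E set21.
have h2 : x2 \in [set y1; y2] by rewrite -E set22.
have h3 : y1 \in [set x1; x2] by rewrite E set21.
have h4 : y2 \in [set x1; x2] by rewrite E set22.
move: h1 h2 h3 h4; rewrite !inE.
by do 4 case/orP=> /eqP ?; subst; auto.
Qed.

Lemma card_Pairs : #|Pairs| = 2 * #|fE @: Pairs|.
Proof.
rewrite -sum1_card (partition_big_imset fE) /= -sum1_card big_distrr /=.
apply: eq_bigr => E /imsetP [[A B] HAB ->].
have nAB : A != B by move: HAB; rewrite inE => /andP [].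
rewrite muln1 (eq_bigl (fun p => p \in [set (A, B); (B, A)])) ?sum1_card.
  by rewrite cards2 xpair_eqE negb_and nAB.
move=> -[C D]; rewrite !inE /fE /=; apply/andP/orP.
  case=> _ /eqP /set2_eq [[/Phi_inj -> /Phi_inj ->]|[/Phi_inj -> /Phi_inj ->]].
    by left.
  by right.
move: HAB; rewrite inE /= => HAB.
case=> /eqP [-> ->]; first by rewrite HAB.
by rewrite eq_sym setIC HAB /fE /= setUC.
Qed.

Lemma card_setn : #|{: {set 'I_n}}| = 2 ^ n.
Proof. by rewrite -cardsT -powersetT card_powerset cardsT card_ord. Qed.

Definition NE : {set {set 'I_n} * {set 'I_n}} := [set p | p.1 :&: p.2 != set0].

Definition hh (g : {ffun 'I_n -> 'I_3}) : {set 'I_n} * {set 'I_n} :=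
  ([set x | val (g x) == 0%N], [set x | val (g x) == 1%N]).

Lemma hh_inj : injective hh.
Proof.
move=> g g' [/setP E1 /setP E2]; apply/ffunP => x; apply/val_inj.
move: (E1 x) (E2 x); rewrite !inE.
case: (g x) => -[|[|[|k]]] // Hk; case: (g' x) => -[|[|[|k']]] // Hk' //=.
Qed.

Lemma card_disj : #|~: NE| = 3 ^ n.
Proof.
have -> : ~: NE = hh @: setT.
  apply/setP => -[A B]; rewrite !inE /= negbK; apply/idP/imsetP.
    move=> /eqP dAB.
    exists [ffun x => if x \in A then ord0 else if x \in B then (inord 1 : 'I_3) else inord 2] => //.
    rewrite /hh; congr pair; apply/setP => x; rewrite !inE ffunE.
      by case: (x \in A); case: (x \in B); rewrite //= inordK.
    case xA: (x \in A); case xB: (x \in B); rewrite //= ?inordK //.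
    have : x \in A :&: B by rewrite inE xA xB.
    by rewrite dAB inE.
  case=> g _ [-> ->]; apply/eqP/setP => x; rewrite !inE.
  by case: (val (g x)) => [|[|]].
by rewrite card_imset ?cardsT ?card_ffun ?card_ord //; exact: hh_inj.
Qed.

Lemma card_NE : #|NE| + 3 ^ n = 4 ^ n.
Proof.
by rewrite -card_disj cardsC card_prod card_setn -expnMn.
Qed.

Lemma card_NE2 : #|Pairs| + (2 ^ n).-1 = #|NE|.
Proof.
rewrite -(cardsID [set p | p.1 == p.2] NE) addnC; congr (_ + _).
  have -> : NE :&: [set p | p.1 == p.2] = (fun A => (A, A)) @: [set~ set0].
    apply/setP => -[A B]; rewrite !inE /=; apply/andP/imsetP.
      case=> H /eqP e; subst B; exists A => //; rewrite !inE.
      by rewrite setIid in H.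
    case=> C; rewrite !inE => H [-> ->]; split => //; by rewrite setIid.
  by rewrite card_imset ?cardsC1 ?card_setn // => A B [].
apply: eq_card => -[A B]; rewrite !inE /=; rewrite andbC; congr (_ && _).
Qed.

End S.

Import GRing.Theory Num.Theory.
From mathcomp Require Import lra ring.
Local Open Scope ring_scope.

Theorem mainTheorem15 (n : nat) (hn : (1 <= n)%N) :
  (#|SPedges n|%:R : rat) =
    ((2%:R ^+ n - 1) ^+ 2 - (3%:R ^+ n - 2%:R ^+ n)) / 2%:R.
Proof.
have H : (2 * #|SPedges n| + 2 ^ n + 3 ^ n = 2 ^ n * 2 ^ n + 1)%N.
  rewrite SPedgesE -card_Pairs -expnMn -(card_NE n) -(card_NE2 n).
  have : (0 < 2 ^ n)%N by rewrite expn_gt0.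
  case: (2 ^ n)%N => [//|k _]; rewrite /= addn1 !addnS addSn; congr S; rewrite addnAC.
have H' := congr1 (fun m : nat => (m%:R : rat)) H; move: H' => /=.
rewrite !natrD !natrM !natrX => H'.
set e := (#|SPedges n|%:R : rat) in H' *.
set x := ((2%:R : rat) ^+ n) in H' *.
set y := ((3%:R : rat) ^+ n) in H' *.
rewrite expr2; apply: (@mulIf _ 2%:R) => //.
rewrite mulfVK //; lra.
Qed.
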